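(* Let $G=(V,E)$ be connected with $n\ge3$ vertices. Then $\mathrm{bc}(u)=0$ for every $u\in V_1$, and for every $u\in V_{\ge2}$ and every $s\in V\setminus\{u\}$: (a) if $s\in V_{\ge2}$, then $\delta_s(u)=\tilde\delta_s(u)+\zeta_s(u)+\mathrm{deg}_1(u)$; (b) if $s\in V_1$ and $s$ is not adjacent to $u$, with unique neighbor $y$, then $\delta_s(u)=\tilde\delta_y(u)+\zeta_y(u)+\mathrm{deg}_1(u)$; (c) if $s\in V_1$ and $s$ is adjacent to $u$, then $\delta_s(u)=n-2$. Consequently $\mathrm{bc}(u)=\frac{1}{(n-1)(n-2)}\sum_{s\in V\setminus\{u\}}\delta_s(u)$ is determined by these values.
   Context: Graphs are finite, simple, undirected, unweighted. In a graph, $\sigma_{st}$ is the number of shortest $s$–$t$ paths and $\sigma_{st}(v)$ the number through $v\notin\{s,t\}$; $\delta_s(v)=\sum_{t\in V,\ t\ne s,v}\sigma_{st}(v)/\sigma_{st}$ (computed in $G$), and $\mathrm{bc}(v)=\frac{1}{(n-1)(n-2)}\sum_{s\ne v}\delta_s(v)$. $V_1$ is the set of degree-1 vertices of $G$, $V_{\ge2}=V\setminus V_1$, $\tilde G$ the subgraph induced by $V_{\ge2}$, with counts $\tilde\sigma$. For $t\in V$, $\mathrm{deg}_1(t)$ is the number of neighbors of $t$ of degree 1 in $G$. For $s,u\in V_{\ge2}$: $\tilde\delta_s(u)=\sum_{t\in V_{\ge2},t\neq s,u}\tilde\sigma_{st}(u)/\tilde\sigma_{st}$ and $\zeta_s(u)=\sum_{t\in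 V_{\ge2},\,t\ne s,u}\mathrm{deg}_1(t)\,\tilde\sigma_{st}(u)/\tilde\sigma_{st}$; set $\tilde\delta_u(u)=\zeta_u(u)=0$. *)

(* Defs.v *)
From mathcomp Require Import all_boot all_order all_algebra.
Set Implicit Arguments. Unset Strict Implicit. Unset Printing Implicit Defensive.
Import Order.TTheory GRing.Theory Num.Theory.
Local Open Scope ring_scope.

(* A walk from s of length k is a k-tuple p
   (the vertices after s) with path e s p; it ends at last s p. *)

Section Graph.
Variables (T : finType) (e : rel T).

Definition nwalks (s t : T) (k : nat) : nat :=
  #|[set p : k.-tuple T | path e s p && (last s p == t)]|.

(* distance: least k < #|T| with a walk of length k (#|T| if unreachable) *)
Definition gdist (s t : T) : nat :=
  find (fun k => (0 < nwalks s t k)%N) (iota 0 #|T|).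

Definition sigma (s t : T) : nat := nwalks s t (gdist s t).

(* sigma_{st}(v): number of shortest s-t paths containing v
   (used only for v <> s, t, where this means v is an inner vertex) *)
Definition sigmav (s t v : T) : nat :=
  #|[set p : (gdist s t).-tuple T |
        [&& path e s p, last s p == t & v \in p]]|.

Definition deg (x : T) : nat := #|[set y | e x y]|.
Definition V1 : {set T} := [set x | deg x == 1%N].
Definition V2 : {set T} := ~: V1.
Definition deg1 (t : T) : nat := #|[set y | e t y & y \in V1]|.

Definition delta (s v : T) : rat :=
  \sum_(t | (t != s) && (t != v)) ((sigmav s t v)%:R / (sigma s t)%:R).

Definition bc (v : T) : rat :=
  (((#|T|.-1) * (#|T|.-2))%N%:R)^-1 * \sum_(s | s != v) delta s v.

End Graph.

(* edge relation of the subgraph induced by V_{>=2} (vertices outside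
   V_{>=2} become isolated and are never used) *)
Definition tilde_rel (T : finType) (e : rel T) : rel T :=
  fun x y => [&& e x y, x \in V2 e & y \in V2 e].

Definition tdelta (T : finType) (e : rel T) (s u : T) : rat :=
  if s == u then 0 else
  \sum_(t in V2 e | (t != s) && (t != u))
     ((sigmav (tilde_rel e) s t u)%:R / (sigma (tilde_rel e) s t)%:R).

Definition zeta (T : finType) (e : rel T) (s u : T) : rat :=
  if s == u then 0 else
  \sum_(t in V2 e | (t != s) && (t != u))
     ((deg1 e t)%:R * (sigmav (tilde_rel e) s t u)%:R
        / (sigma (tilde_rel e) s t)%:R).

(* Main.v *)
Require Import Defs.
From mathcomp Require Import all_boot all_order all_algebra.
Set Implicit Arguments. Unset Strict Implicit. Unset Printing Implicit Defensive.
Import Order.TTheory GRing.Theory Num.Theory.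

Section Gen.
Variables (T : finType) (r : rel T).

Definition W (s t : T) (k : nat) (Q : pred (seq T)) : nat :=
  #|[set p : k.-tuple T | [&& path r s p, last s p == t & Q p]]|.

Lemma nwalksW s t k : nwalks r s t k = W s t k predT.
Proof. by apply: eq_card => p; rewrite !inE andbT. Qed.

Lemma sigmaW s t : sigma r s t = W s t (gdist r s t) predT.
Proof. exact: nwalksW. Qed.

Lemma sigmavW s t v : sigmav r s t v = W s t (gdist r s t) (fun p => v \in p).
Proof. by []. Qed.

Lemma W_gt0 s t k Q : (0 < W s t k Q)%N <->
  exists p : seq T, [/\ size p = k, path r s p, last s p = t & Q p].
Proof.
split.
  by case/card_gt0P => p; rewrite inE => /and3P[pp /eqP lp qp];
    by exists p; split => //; rewrite size_tuple.
case=> p [sp pp lp qp]; apply/card_gt0P.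
have sp' : size p == k by rewrite sp.
by exists (Tuple sp'); rewrite inE /= pp lp eqxx qp.
Qed.

Lemma W0 s t Q : ~~ Q [::] -> W s t 0 Q = 0%N.
Proof.
move=> hQ; apply/eqP; rewrite eqn0Ngt; apply/negP => /W_gt0 [p [sp _ _ qp]].
by move: sp qp => /size0nil ->; rewrite (negbTE hQ).
Qed.

Lemma W0n s t Q : s != t -> W s t 0 Q = 0%N.
Proof.
move=> hst; apply/eqP; rewrite eqn0Ngt; apply/negP => /W_gt0 [p [sp _ lp _]].
by move: sp lp => /size0nil -> /= /eqP; rewrite (negbTE hst).
Qed.

Lemma W_eq s t k Q Q' :
  (forall p : seq T, size p = k -> path r s p -> last s p = t -> Q p = Q' p) ->
  W s t k Q = W s t k Q'.
Proof.
move=> h; apply: eq_card => p; rewrite !inE.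
case/boolP: (path r s p && (last s p == t)) => [/andP[pp /eqP lp]|].
  by rewrite pp lp eqxx /= h // size_tuple.
by rewrite negb_and => /orP[] /negbTE ->; rewrite ?andbF.
Qed.

Lemma W_cons s t k Q y : (forall z, r s z -> z = y) -> r s y ->
  W s t k.+1 Q = W y t k (fun p => Q (y :: p)).
Proof.
move=> hy rsy; rewrite /W.
have -> : [set p : k.+1.-tuple T | [&& path r s p, last s p == t & Q p]] =
   (fun p : k.-tuple T => cons_tuple y p) @:
      [set p : k.-tuple T | [&& path r y p, last y p == t & Q (y :: p)]].
  apply/setP => p; apply/idP/imsetP.
    case/tupleP: p => x p; rewrite inE /= => /and3P[/andP[rsx pp] lp qp].
    have ex := hy _ rsx; subst x.
    by exists p; [rewrite inE pp lp qp | apply: val_inj].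
  by case=> q; rewrite inE => /and3P[pq lq qq] ->; rewrite inE /= rsy pq lq qq.
rewrite card_imset // => p q /(congr1 val) [] h; exact: val_inj.
Qed.

Lemma W_rcons s t k Q z : (forall x, r x t -> x = z) -> r z t ->
  W s t k.+1 Q = W s z k (fun p => Q (rcons p t)).
Proof.
move=> hz rzt; rewrite /W.
have -> : [set p : k.+1.-tuple T | [&& path r s p, last s p == t & Q p]] =
   (fun p : k.-tuple T => rcons_tuple p t) @:
      [set p : k.-tuple T | [&& path r s p, last s p == z & Q (rcons p t)]].
  apply/setP => p; apply/idP/imsetP.
    case/tupleP: p => x p; rewrite inE => /and3P[pp lt qp].
    change (is_true (path r s (x :: p))) in pp.
    change (is_true (last s (x :: p) == t)) in lt.
    change (is_true (Q (x :: p))) in qp.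
    rewrite (lastI x p) in pp lt qp; rewrite rcons_path in pp.
    rewrite last_rcons in lt; move: pp lt => /andP[pp rl] /eqP lt.
    subst t; have el := hz _ rl.
    exists (belast_tuple x p); first by rewrite inE /= pp el eqxx qp.
    by apply: val_inj => /=; rewrite -lastI.
  case=> q; rewrite inE => /and3P[pq lq qq] ->.
  by rewrite inE /= rcons_path last_rcons eqxx (eqP lq) rzt pq qq.
rewrite card_imset // => p q /(congr1 val) /= /eqP.
by rewrite eqseq_rcons eqxx andbT => /eqP; exact: val_inj.
Qed.

Lemma gd_min s t k : (k < gdist r s t)%N -> nwalks r s t k = 0%N.
Proof.
move=> hk; have hs : (k < #|T|)%N.
  by apply: (leq_trans hk); rewrite /gdist -{2}(size_iota 0 #|T|) find_size.
have := before_find 0%N hk; rewrite nth_iota // add0n.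
by move/negbT; rewrite -eqn0Ngt => /eqP.
Qed.

Lemma gd_lt s t : (gdist r s t < #|T|)%N -> (0 < nwalks r s t (gdist r s t))%N.
Proof.
move=> h; have := @nth_find _ 0%N (fun k => (0 < nwalks r s t k)%N) (iota 0 #|T|).
rewrite has_find size_iota => /(_ h); rewrite nth_iota // add0n.
Qed.

Lemma gd_some s t k : (k < #|T|)%N -> (0 < nwalks r s t k)%N ->
  (gdist r s t <= k)%N.
Proof.
move=> hk hw; rewrite leqNgt; apply/negP => /gd_min; move: hw.
by case: (nwalks r s t k).
Qed.

Lemma gd_some_lt s t k : (k < #|T|)%N -> (0 < nwalks r s t k)%N ->
  (gdist r s t < #|T|)%N.
Proof. by move=> hk hw; apply: leq_ltn_trans (gd_some hk hw) hk. Qed.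

Lemma gd_eq s t d : (gdist r s t < #|T|)%N -> (0 < nwalks r s t d)%N ->
  (forall k, (k < d)%N -> nwalks r s t k = 0%N) -> gdist r s t = d.
Proof.
move=> hl hd hk; have g0 := gd_lt hl.
case: (ltngtP (gdist r s t) d) => // h.
  by move: g0; rewrite hk.
by move: hd; rewrite gd_min.
Qed.


Lemma walk_nw s t p : path r s p -> last s p = t -> (0 < nwalks r s t (size p))%N.
Proof. by move=> pp lp; rewrite nwalksW; apply/W_gt0; exists p. Qed.

Lemma nw_walk s t k : (0 < nwalks r s t k)%N ->
  exists p : seq T, [/\ size p = k, path r s p & last s p = t].
Proof. by rewrite nwalksW => /W_gt0 [p [? ? ? _]]; exists p. Qed.

Lemma gd_conn s t : connect r s t -> (gdist r s t < #|T|)%N.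
Proof.
case/connectP => p pp ->; case: (shortenP pp) => q pq uq _.
have hq : (size q < #|T|)%N.
  by have := max_card (mem (s :: q)); rewrite (card_uniqP uq).
by apply: (gd_some_lt hq); apply: walk_nw.
Qed.

End Gen.

Section Main.
Variables (T : finType) (e : rel T).
Hypotheses (esym : symmetric e) (eirr : irreflexive e)
  (conn : forall x y : T, connect e x y) (n3 : (3 <= #|T|)%N).

Lemma leaf_nb x : x \in V1 e -> exists y, e x y /\ forall z, e x z -> z = y.
Proof.
rewrite inE /deg => /cards1P [y hy]; exists y; split.
  have : y \in [set z | e x z] by rewrite hy set11.
  by rewrite inE.
move=> z exz; have : z \in [set z | e x z] by rewrite inE.
by rewrite hy inE => /eqP.
Qed.

Lemma leaf_uniq x y z : x \in V1 e -> e x y -> e x z -> y = z.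
Proof. by case/leaf_nb => w [_ h] /h -> /h ->. Qed.

Lemma closed_conn (A : {set T}) a x :
  (forall b c, b \in A -> e b c -> c \in A) -> a \in A -> connect e a x -> x \in A.
Proof.
move=> hA aA /connectP [p pp ->]; elim: p a aA pp => //= b p ih a aA /andP[eab pp].
exact: ih (hA _ _ aA eab) pp.
Qed.

Lemma no_two_leaves t z : t \in V1 e -> z \in V1 e -> e t z -> False.
Proof.
move=> tV zV etz.
have hA : forall b c, b \in [set t; z] -> e b c -> c \in [set t; z].
  move=> b c; rewrite !inE => /orP[] /eqP -> h.
    by rewrite (leaf_uniq tV h etz) eqxx orbT.
  by rewrite (leaf_uniq zV h (etrans (esym z t) etz)) eqxx.
have : #|T| <= #|[set t; z]|.
  rewrite -cardsT; apply: subset_leq_card; apply/subsetP => x _.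
  by apply: (closed_conn hA _ (conn t x)); rewrite !inE eqxx.
by rewrite cards2; case: (t != z) => //=; move: n3; case: #|T| => [|[|[|]]].
Qed.

Lemma nb_leaf_V2 t z : t \in V1 e -> e t z -> z \in V2 e.
Proof.
by move=> tV etz; rewrite inE; apply/negP => zV; apply: (no_two_leaves tV zV etz).
Qed.

Lemma gconn s t : (gdist e s t < #|T|)%N.
Proof. exact: gd_conn (conn s t). Qed.

Lemma sig_gt0 s t : (0 < sigma e s t)%N.
Proof. exact: gd_lt (gconn s t). Qed.

Lemma gdist0 s : gdist e s s = 0%N.
Proof. by apply: gd_eq (gconn s s) _ _ => //; apply: (@walk_nw _ _ s s [::]). Qed.

Lemma leaf_inner u s t p : u \in V1 e -> size p = gdist e s t -> path e s p ->
  last s p = t -> u \in p -> u != t -> False.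
Proof.
move=> uV sp pp lp up; move: sp pp lp; case/splitPr: up => p1 p2 sp pp lp.
case: p2 => [|b p3] in sp pp lp *; first by rewrite last_cat /= in lp; rewrite lp eqxx.
move: pp; rewrite cat_path /= => /and4P[pp1 eau eub pp3] _.
have ab : last s p1 = b by apply: (leaf_uniq uV); rewrite // esym.
have hw := @walk_nw _ e s t (p1 ++ p3).
rewrite cat_path pp1 ab pp3 last_cat ab in hw.
rewrite last_cat /= in lp; have := hw isT lp.
rewrite gd_min // -sp size_cat /= size_cat addnS addnS ltnS; exact: leqnSn.
Qed.

Definition f (r : rel T) s t u : rat := ((sigmav r s t u)%:R / (sigma r s t)%:R)%R.

Lemma nb_rev t z : t \in V1 e -> e t z -> forall x, e x t -> x = z.
Proof. by move=> tV etz x ext; apply: (leaf_uniq tV); rewrite // esym. Qed.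

Lemma gd_rcons s t z : t \in V1 e -> e t z -> s != t ->
  gdist e s t = (gdist e s z).+1.
Proof.
move=> tV etz st; have hz := nb_rev tV etz; have ezt : e z t by rewrite esym.
have key k : nwalks e s t k.+1 = nwalks e s z k.
  by rewrite !nwalksW (W_rcons _ _ _ hz ezt); apply: W_eq.
apply: (gd_eq (gconn s t)); first by rewrite key; apply: gd_lt (gconn s z).
case=> [_|k hk]; first by rewrite nwalksW W0n.
by rewrite key gd_min.
Qed.

Lemma f_rcons s t u z : t \in V1 e -> e t z -> s != t -> u != t ->
  f e s t u = f e s z u.
Proof.
move=> tV etz st ut; have hz := nb_rev tV etz; have ezt : e z t by rewrite esym.
rewrite /f !sigmavW !sigmaW (gd_rcons tV etz st) !(W_rcons _ _ _ hz ezt).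
congr (_%:R / _%:R)%R; apply: W_eq => // p _ _ _.
by rewrite mem_rcons in_cons (negbTE ut).
Qed.

Lemma gd_cons s t y : s \in V1 e -> e s y -> s != t ->
  gdist e s t = (gdist e y t).+1.
Proof.
move=> sV esy st; have [w [_ hw]] := leaf_nb sV; have hy : forall z, e s z -> z = y.
  by move=> z /hw ->; rewrite (hw _ esy).
have key k : nwalks e s t k.+1 = nwalks e y t k.
  by rewrite !nwalksW (W_cons _ _ _ hy esy); apply: W_eq.
apply: (gd_eq (gconn s t)); first by rewrite key; apply: gd_lt (gconn y t).
case=> [_|k hk]; first by rewrite nwalksW W0n.
by rewrite key gd_min.
Qed.

Lemma hy_of s y : s \in V1 e -> e s y -> forall z, e s z -> z = y.
Proof. by move=> sV esy z esz; apply: (leaf_uniq sV esz esy). Qed.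

Lemma f_cons s t u y : s \in V1 e -> e s y -> s != t -> u != y ->
  f e s t u = f e y t u.
Proof.
move=> sV esy st uy; have hy := hy_of sV esy.
rewrite /f !sigmavW !sigmaW (gd_cons sV esy st) !(W_cons _ _ _ hy esy).
congr (_%:R / _%:R)%R; apply: W_eq => // p _ _ _.
by rewrite in_cons (negbTE uy).
Qed.

Lemma f_cons1 s t y : s \in V1 e -> e s y -> s != t -> f e s t y = 1%R.
Proof.
move=> sV esy st; have hy := hy_of sV esy.
rewrite /f !sigmavW !sigmaW.
have -> : W e s t (gdist e s t) (fun p => y \in p) = W e s t (gdist e s t) predT.
  rewrite (gd_cons sV esy st) !(W_cons _ _ _ hy esy).
  by apply: W_eq => // p _ _ _; rewrite mem_head.
by rewrite -sigmaW divff // pnatr_eq0 -lt0n sig_gt0.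
Qed.

Lemma f_self s u : f e s s u = 0%R.
Proof. by rewrite /f sigmavW gdist0 W0 // mul0r. Qed.

Lemma f_last s u : s != u -> f e s u u = 1%R.
Proof.
move=> su; rewrite /f !sigmavW !sigmaW.
have -> : W e s u (gdist e s u) (fun p => u \in p) = W e s u (gdist e s u) predT.
  apply: W_eq => p _ _ lp; have := mem_last s p; rewrite lp in_cons.
  by rewrite eq_sym (negbTE su).
by rewrite -sigmaW divff // pnatr_eq0 -lt0n sig_gt0.
Qed.

Lemma tilde_sub : subrel (tilde_rel e) e.
Proof. by move=> x y /and3P[]. Qed.

Lemma W_tilde s t Q : s \in V2 e -> t \in V2 e ->
  W (tilde_rel e) s t (gdist e s t) Q = W e s t (gdist e s t) Q.
Proof.
move=> sV tV; apply: eq_card => p; rewrite !inE; apply/idP/idP.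
  by case/and3P => pp -> ->; rewrite (sub_path tilde_sub pp).
case/and3P => pp lp ->; rewrite lp !andbT.
have hs : {in [pred x | x \in V2 e] &, subrel e (tilde_rel e)}.
  by move=> x y xV yV exy; rewrite /tilde_rel exy xV yV.
apply: (sub_in_path hs _ pp).
rewrite /= sV; apply/allP => v vp; case: (eqVneq v t) => [->//|vt].
rewrite /= /V2 in_setC; apply/negP => vV.
exact: (leaf_inner vV (size_tuple p) pp (eqP lp) vp vt).
Qed.

Lemma gd_tilde s t : s \in V2 e -> t \in V2 e ->
  gdist (tilde_rel e) s t = gdist e s t.
Proof.
move=> sV tV; have hd := gconn s t.
have h1 : (0 < nwalks (tilde_rel e) s t (gdist e s t))%N.
  by rewrite nwalksW W_tilde // -nwalksW gd_lt.
apply: (gd_eq (gd_some_lt hd h1) h1) => k hk.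
have h0 := gd_min hk; rewrite nwalksW in h0; rewrite nwalksW.
apply/eqP; rewrite -leqn0 -h0; apply: subset_leq_card.
by apply/subsetP => p; rewrite !inE => /and3P[pp -> _]; rewrite (sub_path tilde_sub pp).
Qed.

Lemma f_tilde s t u : s \in V2 e -> t \in V2 e ->
  f (tilde_rel e) s t u = f e s t u.
Proof. by move=> sV tV; rewrite /f !sigmavW !sigmaW gd_tilde // !W_tilde. Qed.

Lemma deg1_leaf z : z \in V1 e -> deg1 e z = 0%N.
Proof.
move=> zV; apply/eqP; rewrite cards_eq0; apply/eqP/setP => t.
rewrite inE in_set0; apply/negP => /andP[ezt tV].
by apply: (no_two_leaves tV zV); rewrite esym.
Qed.

Lemma sum_leaves (G : T -> rat) :
  (forall t z, t \in V1 e -> e t z -> G t = G z) ->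
  (\sum_(t in V1 e) G t = \sum_z (deg1 e z)%:R * G z)%R.
Proof.
move=> hG.
transitivity (\sum_(t in V1 e) \sum_(z | e t z) G z)%R.
  apply: eq_bigr => t tV; have [y [ety hy]] := leaf_nb tV.
  rewrite (big_pred1 y) ?(hG _ _ tV ety) // => z /=.
  by apply/idP/eqP => [/hy //|->].
rewrite (exchange_big_dep predT) //=; apply: eq_bigr => z _.
rewrite (eq_bigl (fun t => t \in [set t | e z t & t \in V1 e])); last first.
  by move=> t; rewrite inE esym andbC.
by rewrite sumr_const mulr_natl.
Qed.

Lemma part_a s u : s \in V2 e -> u \in V2 e -> s != u ->
  delta e s u = (tdelta e s u + zeta e s u + (deg1 e u)%:R)%R.
Proof.
move=> sV uV su.
have dF : delta e s u = (\sum_(t | (t != s) && (t != u)) f e s t u)%R by [].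
have V1n : forall x, x \in V2 e -> x \in V1 e = false.
  by move=> x; rewrite /V2 in_setC => /negbTE.
rewrite dF (bigID (fun t => t \in V2 e)) /=.
have -> : (\sum_(t | ((t != s) && (t != u)) && (t \in V2 e)) f e s t u)%R = tdelta e s u.
  rewrite /tdelta (negbTE su); apply: eq_big => [t|t /andP[/andP[ts tu] tV]].
    by rewrite andbC.
  by rewrite -f_tilde.
have -> : (\sum_(t | ((t != s) && (t != u)) && ~~ (t \in V2 e)) f e s t u)%R =
          (\sum_(t in V1 e) f e s t u)%R.
  apply: eq_bigl => t; rewrite /V2 in_setC negbK.
  case tV: (t \in V1 e); rewrite ?andbF ?andbT //.
  apply/andP; split; apply/eqP => h; subst t; by rewrite V1n in tV.
rewrite (sum_leaves (G := fun t => f e s t u)); last first.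
  move=> t z tV etz; apply: f_rcons => //; apply/eqP => h; subst t.
    by rewrite V1n in tV.
  by rewrite V1n in tV.
rewrite (bigD1 u) //= f_last // mulr1 (bigD1 s) //= f_self mulr0 add0r.
have -> : (\sum_(z | (z != u) && (z != s)) (deg1 e z)%:R * f e s z u)%R = zeta e s u.
  rewrite /zeta (negbTE su) (bigID (fun z => z \in V2 e)) /= [X in (_ + X)%R]big1 ?addr0.
    apply: eq_big => [z|z /andP[/andP[zu zs] zV]].
      by case: (z \in V2 e); case: (z != u); case: (z != s).
    by rewrite -f_tilde // mulrA.
  move=> z /andP[_ zV]; rewrite deg1_leaf ?mul0r //.
  by move: zV; rewrite /V2 in_setC negbK.
by rewrite (addrC ((deg1 e u)%:R)%R) addrA.
Qed.

Lemma dF x u : delta e x u = (\sum_(t | (t != x) && (t != u)) f e x t u)%R.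
Proof. by []. Qed.

Lemma part_b s u y : s \in V1 e -> ~~ e s u -> e s y -> u \in V2 e -> s != u ->
  delta e s u = (tdelta e y u + zeta e y u + (deg1 e u)%:R)%R.
Proof.
move=> sV nsu esy uV su.
have yV := nb_leaf_V2 sV esy.
have uy : u != y by apply/eqP => h; subst u; rewrite esy in nsu.
have ys : y != s by apply/eqP => h; subst y; rewrite eirr in esy.
have us : u != s by rewrite eq_sym.
rewrite -part_a // ?(eq_sym y) // !dF.
transitivity (\sum_(t | t != u) f e y t u)%R.
  rewrite (bigD1 s (P := fun t => t != u)) //= (f_rcons sV esy ys us) f_self add0r.
  apply: eq_big => [t|t /andP[ts _]]; first by rewrite andbC.
  by apply: f_cons; rewrite // eq_sym.
rewrite (bigD1 y (P := fun t => t != u)) 1?eq_sym //= f_self add0r.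
by apply: eq_bigl => t; rewrite andbC.
Qed.

Lemma part_c s u : s \in V1 e -> e s u -> s != u ->
  delta e s u = (#|T| - 2)%:R%R.
Proof.
move=> sV esu su; rewrite dF.
rewrite (eq_bigr (fun _ => 1%R)) => [|t /andP[ts _]]; last first.
  by apply: f_cons1; rewrite // eq_sym.
rewrite (eq_bigl (fun t => t \in [predC [set s; u]])); last first.
  by move=> t; rewrite !inE negb_or.
rewrite sumr_const; have := cardC [set s; u]; rewrite cards2 su => <-.
by rewrite addKn.
Qed.

Lemma part_bc u : u \in V1 e -> bc e u = 0%R.
Proof.
move=> uV; rewrite /bc big1 ?mulr0 // => s su; rewrite /delta big1 // => t /andP[ts tu].
rewrite sigmavW.
have -> : W e s t (gdist e s t) (fun p => u \in p) = 0%N.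
  apply/eqP; rewrite eqn0Ngt; apply/negP => /W_gt0 [p [sp pp lp up]].
  by apply: (leaf_inner uV sp pp lp up); rewrite eq_sym.
by rewrite mul0r.
Qed.

End Main.

Local Open Scope ring_scope.

Theorem mainTheorem5 (T : finType) (e : rel T)
  (esym : symmetric e) (eirr : irreflexive e)
  (conn : forall x y : T, connect e x y)
  (n3 : (3 <= #|T|)%N) :
  (forall u : T, u \in V1 e -> bc e u = 0) /\
  (forall u s : T, u \in V2 e -> s != u ->
     [/\ (s \in V2 e ->
            delta e s u = tdelta e s u + zeta e s u + (deg1 e u)%:R),
         (s \in V1 e -> ~~ e s u -> forall y : T, e s y ->
            delta e s u = tdelta e y u + zeta e y u + (deg1 e u)%:R)
       & (s \in V1 e -> e s u -> delta e s u = (#|T| - 2)%:R)]).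
Proof.
split; first by move=> u uV; apply: part_bc.
move=> u s uV su; split.
- by move=> sV; apply: part_a.
- by move=> sV nsu y esy; apply: part_b.
- by move=> sV esu; apply: part_c.
Qed.
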